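(* For every real number $\kappa\ge 0$ there exists a contraction $T$ on a Hilbert space such that $\sqrt{1-TT^*}$ has finite rank and $K(T) = \kappa$. In particular, there exist (non-pure) contractions with finite-rank defect $\sqrt{1-TT^*}$ whose curvature is not an integer.
   Context: A contraction $T$ on $H$ is pure if ${T^*}^n h \to 0$ for every $h\in H$. For a contraction $T$ with $\Delta_T := \sqrt{1-TT^*}$ of finite rank, the curvature of $T$ is $$K(T) := \int_{|z|=1} \lim_{r\uparrow 1} (1-r^2)\, \operatorname{tr}\big(\Delta_T (1-rzT^* )^{-1}(1-r\bar z T)^{-1}\Delta_T\big)\, dz,$$ where $dz$ denotes normalized arc-length (Haar probability) measure on the unit circle. *)

(* Defs.v *)
From HB Require Import structures.
From mathcomp Require Import all_boot all_order all_algebra.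
From mathcomp Require Import all_classical all_reals all_analysis.
From mathcomp Require Import complex.
Set Implicit Arguments. Unset Strict Implicit. Unset Printing Implicit Defensive.
Import Order.TTheory GRing.Theory Num.Theory.
Import numFieldNormedType.Exports.
Local Open Scope classical_set_scope.
Local Open Scope ring_scope.

Section Hilbert.
Variables (R : realType) (V : lmodType R[i]) (ip : V -> V -> R[i]).

Definition is_inner_product : Prop :=
  [/\ (forall (a : R[i]) (x y z : V), ip (a *: x + y) z = a * ip x z + ip y z),
      (forall x y : V, ip y x = conjc (ip x y)),
      (forall x : V, 0 <= ip x x) &
      (forall x : V, ip x x = 0 -> x = 0)].

Definition ipnorm (x : V) : R := Num.sqrt (complex.Re (ip x x)).

Definition ip_complete : Prop :=
  forall u : nat -> V,
    (forall eps : R, 0 < eps -> exists N : nat, forall m k : nat,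
        (N <= m)%N -> (N <= k)%N -> ipnorm (u m - u k) < eps) ->
    exists v : V, forall eps : R, 0 < eps -> exists N : nat, forall m : nat,
        (N <= m)%N -> ipnorm (u m - v) < eps.

Definition is_hilbert : Prop := is_inner_product /\ ip_complete.

Definition is_linear_op (T : V -> V) : Prop :=
  forall (a : R[i]) (x y : V), T (a *: x + y) = a *: T x + T y.

Definition is_bounded_op (T : V -> V) : Prop :=
  is_linear_op T /\ exists M : R, forall x, ipnorm (T x) <= M * ipnorm x.

Definition is_contraction_op (T : V -> V) : Prop :=
  is_linear_op T /\ forall x, ipnorm (T x) <= ipnorm x.

Definition is_adjoint (T S : V -> V) : Prop :=
  forall x y : V, ip (T x) y = ip x (S y).

Definition is_defect_op (T Ts D : V -> V) : Prop :=
  [/\ is_bounded_op D, is_adjoint D D,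
      (forall x, 0 <= ip (D x) x) &
      (forall x, D (D x) = x - T (Ts x))].

Definition finite_rank (D : V -> V) : Prop :=
  exists (n : nat) (f : 'I_n -> V),
    forall x, exists c : 'I_n -> R[i], D x = \sum_(i < n) c i *: f i.

Definition is_onb_range (D : V -> V) (n : nat) (e : 'I_n -> V) : Prop :=
  [/\ (forall i j : 'I_n, ip (e i) (e j) = (i == j)%:R),
      (forall i, exists x, e i = D x) &
      (forall x, exists c : 'I_n -> R[i], D x = \sum_(i < n) c i *: e i)].

(* trace of a finite-rank operator F with range inside span(e), e orthonormal:
   tr F = sum_i <F e_i, e_i> *)
Definition trace_on (n : nat) (e : 'I_n -> V) (F : V -> V) : R[i] :=
  \sum_(i < n) ip (F (e i)) (e i).

Definition inv_op (A : V -> V) (v : V) : V := xget 0 [set w | A w = v].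

Definition circ (theta : R) : R[i] := (cos theta +i* sin theta)%C.

(* (1 - r^2) tr( D (1 - r z Ts)^{-1} (1 - r zbar T)^{-1} D ) at z = e^{i theta};
   this trace is a (nonnegative) real number, we take its real part. *)
Definition curv_integrand (T Ts D : V -> V) (n : nat) (e : 'I_n -> V)
    (theta r : R) : R :=
  let z := circ theta in
  let c := (r%:C * z)%C in
  (1 - r ^+ 2) * complex.Re (trace_on e
     (fun v => D (inv_op (fun w => w - c *: Ts w)
                   (inv_op (fun w => w - conjc c *: T w) (D v))))).

Definition curv_boundary (T Ts D : V -> V) (n : nat) (e : 'I_n -> V)
    (theta : R) : R :=
  lim (curv_integrand T Ts D e theta @ (1 : R)^'-).

(* K(T) = \int_{|z|=1} ... dz with dz normalized arc length:
   (1/(2 pi)) \int_0^{2 pi} ... d theta, as an extended real *)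
Definition curvature (T Ts D : V -> V) (n : nat) (e : 'I_n -> V) : \bar R :=
  ((2 * pi)^-1)%:E *
  (\int[@lebesgue_measure R]_(t in `[0%R, (2 * pi)%R]) (curv_boundary T Ts D e t)%:E)%E.

Definition is_pure (Ts : V -> V) : Prop :=
  forall h : V, (fun k : nat => ipnorm (iter k Ts h)) @ \oo --> (0 : R).

End Hilbert.

(* Main.v *)
Require Import Defs.
From HB Require Import structures.
From mathcomp Require Import all_boot all_order all_algebra.
From mathcomp Require Import all_classical all_reals all_analysis.
From mathcomp Require Import complex.
From mathcomp Require Import lra ring.
Import Order.TTheory GRing.Theory Num.Theory.
Import numFieldNormedType.Exports.
Local Open Scope classical_set_scope.
Local Open Scope ring_scope.
Set Implicit Arguments. Unset Strict Implicit. Unset Printing Implicit Defensive.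
Section SeriesToolkit.
Variable R : realType.
Implicit Types u v : nat -> R.

Definition psb u := exists B : R, forall n, series u n <= B.
Definition bsum u := psb (fun k => `|u k|).
Definition ssum u : R := limn (series u).

Lemma seriesE u n : series u n = \sum_(0 <= k < n) u k.
Proof. by []. Qed.

Lemma series_nd u : (forall k, 0 <= u k) -> {homo series u : n m / (n <= m)%N >-> n <= m}.
Proof. by move=> u0; apply: nondecreasing_series => n _ _; exact: u0. Qed.

Lemma nneg_cvg u : (forall k, 0 <= u k) -> psb u -> cvgn (series u).
Proof.
move=> u0 [B hB]; apply/cvg_ex; eexists.
apply: nondecreasing_cvgn; first exact: series_nd.
by exists B => _ [n _ <-].
Qed.

Lemma bsum_cvg u : bsum u -> cvgn (series u).
Proof.
move=> hu; apply: normed_cvg.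
by apply: nneg_cvg => // k; exact: normr_ge0.
Qed.

Lemma psb_le u v : (forall k, u k <= v k) -> psb v -> psb u.
Proof.
move=> uv [B hB]; exists B => n; apply: le_trans (hB n).
by rewrite !seriesE; apply: ler_sum => k _; exact: uv.
Qed.

Lemma bsum_le u v : (forall k, `|u k| <= v k) -> psb v -> bsum u.
Proof. exact: psb_le. Qed.

Lemma psbD u v : psb u -> psb v -> psb (fun k => u k + v k).
Proof.
move=> [B1 h1] [B2 h2]; exists (B1 + B2) => n.
by rewrite seriesE big_split /=; apply: lerD; rewrite -seriesE.
Qed.

Lemma psbZ (c : R) u : 0 <= c -> psb u -> psb (fun k => c * u k).
Proof.
move=> c0 [B h]; exists (c * B) => n.
by rewrite seriesE -mulr_sumr ler_wpM2l // -seriesE.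
Qed.

Lemma ssum_ge u n : (forall k, 0 <= u k) -> psb u -> series u n <= ssum u.
Proof.
move=> u0 hu; apply: nondecreasing_cvgn_le; first exact: series_nd.
exact: nneg_cvg.
Qed.

Lemma ssum_le u (B : R) : cvgn (series u) -> (forall n, series u n <= B) -> ssum u <= B.
Proof. by move=> hc hB; apply: limr_le => //; exact: nearW. Qed.

Lemma ssum_ge0 u : (forall k, 0 <= u k) -> psb u -> 0 <= ssum u.
Proof.
move=> u0 hu; apply: le_trans (ssum_ge 0 u0 hu).
by rewrite seriesE big_geq.
Qed.

Lemma ssumD u v : cvgn (series u) -> cvgn (series v) ->
  ssum (fun k => u k + v k) = ssum u + ssum v.
Proof. move=> hu hv; exact: (lim_seriesD hu hv). Qed.

Lemma ssumB u v : cvgn (series u) -> cvgn (series v) ->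
  ssum (fun k => u k - v k) = ssum u - ssum v.
Proof. move=> hu hv; exact: (lim_seriesB hu hv). Qed.

Lemma ssumZ (c : R) u : cvgn (series u) -> ssum (fun k => c * u k) = c * ssum u.
Proof. move=> hu; exact: (lim_seriesZ c hu). Qed.

Lemma cvg_seriesD u v : cvgn (series u) -> cvgn (series v) ->
  cvgn (series (fun k => u k + v k)).
Proof. move=> hu hv; exact: (is_cvg_seriesD hu hv). Qed.

Lemma cvg_seriesB u v : cvgn (series u) -> cvgn (series v) ->
  cvgn (series (fun k => u k - v k)).
Proof. move=> hu hv; exact: (is_cvg_seriesB hu hv). Qed.

Lemma cvg_seriesZ (c : R) u : cvgn (series u) -> cvgn (series (fun k => c * u k)).
Proof. by move=> hu; have := is_cvg_seriesZ (k:=c) hu. Qed.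

Lemma series_shift u n : series u n.+1 = u 0%N + series (fun k => u k.+1) n.
Proof. by rewrite !seriesE big_nat_recl. Qed.

Lemma ssum_shift u : cvgn (series u) ->
  cvgn (series (fun k => u k.+1)) /\ ssum u = u 0%N + ssum (fun k => u k.+1).
Proof.
move=> hu.
have h : series (fun k => u k.+1) @ \oo --> ssum u - u 0%N.
  have -> : series (fun k => u k.+1) = (fun n => series u n.+1 - u 0%N).
    by apply/funext => n; rewrite series_shift addrC addKr.
  apply: cvgB; last exact: cvg_cst.
  by rewrite (cvg_shiftS (series u)); exact: hu.
split; first by apply/cvg_ex; eexists; exact: h.
by rewrite /ssum (cvg_lim _ h) // addrC subrK.
Qed.

Lemma ssum_single u : (forall k, u k.+1 = 0) -> ssum u = u 0%N.
Proof.
move=> h; have hc : series u @ \oo --> u 0%N.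
  apply: cvg_near_cst; exists 1%N => // n /= n1.
  case: n n1 => // n _; rewrite series_shift.
  by rewrite seriesE big1 ?addr0 // => k _; rewrite h.
by rewrite /ssum (cvg_lim _ hc).
Qed.

Lemma ssum_eq0 u : (forall k, 0 <= u k) -> psb u -> ssum u = 0 -> forall k, u k = 0.
Proof.
move=> u0 hu s0 k; apply/eqP; rewrite eq_le u0 andbT.
have := ssum_ge k.+1 u0 hu; rewrite s0 seriesE big_nat_recr //=.
move=> h; apply: le_trans h; rewrite lerDr sumr_ge0 // => i _.
Qed.

End SeriesToolkit.
Section L2.
Variables (R : realType) (N : nat).
Local Notation C := R[i].

Definition sqn (z : C) : R := complex.Re z ^+ 2 + complex.Im z ^+ 2.
Definition FF := (bool -> nat -> 'I_N -> C)%type.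
Definition sqs (x : FF) (s : bool) (m : nat) : R := \sum_(i < N) sqn (x s m i).
Definition l2P (x : FF) := forall s, psb (sqs x s).
Definition l2 : {pred FF} := mem [set x | l2P x].

Lemma sqn_ge0 z : 0 <= sqn z.
Proof. by rewrite /sqn addr_ge0 // sqr_ge0. Qed.

Lemma sqs_ge0 x s m : 0 <= sqs x s m.
Proof. by apply: sumr_ge0 => i _; exact: sqn_ge0. Qed.

Lemma sqn_scale_add (a z w : C) : sqn (a * z + w) <= 2 * sqn a * sqn z + 2 * sqn w.
Proof.
case: a => a1 a2; case: z => z1 z2; case: w => w1 w2; rewrite /sqn /=.
have -> : 2 * (a1 ^+ 2 + a2 ^+ 2) * (z1 ^+ 2 + z2 ^+ 2) = 2 * ((a1 * z1 - a2 * z2) ^+ 2 + (a1 * z2 + a2 * z1) ^+ 2) by ring.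
move: (a1 * z1 - a2 * z2) (a1 * z2 + a2 * z1) => p q.
have h1 := sqr_ge0 (p - w1); have h2 := sqr_ge0 (q - w2); nra.
Qed.

Lemma l2_submod_closed : submod_closed l2.
Proof.
split.
  rewrite inE /= => s; exists 0 => n; rewrite seriesE big1 // => m _.
  by rewrite /sqs big1 // => i _; rewrite /sqn /= expr0n /= addr0.
move=> a x y; rewrite !inE /= => hx hy s.
apply: (@psb_le _ _ (fun m => 2 * sqn a * sqs x s m + 2 * sqs y s m)).
  move=> m; rewrite /sqs mulr_sumr mulr_sumr -big_split /=.
  by apply: ler_sum => i _; exact: sqn_scale_add.
apply: psbD; apply: psbZ => //; try exact: hx; try exact: hy.
by rewrite mulr_ge0 // sqn_ge0.
Qed.

HB.instance Definition _ := GRing.isSubmodClosed.Build C FF l2 l2_submod_closed.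

Record VV := MkVV { vval : FF; vvalP : vval \in l2 }.
HB.instance Definition _ := [isSub for vval].
HB.instance Definition _ := [Choice of VV by <:].
HB.instance Definition _ := [SubChoice_isSubLmodule of VV by <:].

Lemma valD (x y : VV) : vval (x + y) = vval x + vval y.
Proof. by []. Qed.
Lemma valZ (a : C) (x : VV) : vval (a *: x) = a *: vval x.
Proof. by []. Qed.
Lemma valN (x : VV) : vval (- x) = - vval x.
Proof. by []. Qed.
Lemma val0 : vval (0 : VV) = 0.
Proof. by []. Qed.

End L2.
Section IP.
Variables (R : realType) (N : nat).
Local Notation C := R[i].
Local Notation FF := (FF R N).
Local Notation VV := (VV R N).
Local Notation l2 := (@l2 R N).
Implicit Types u v : nat -> C.

Lemma Re_sum (I : Type) (r : seq I) (P : pred I) (f : I -> C) :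
  complex.Re (\sum_(i <- r | P i) f i) = \sum_(i <- r | P i) complex.Re (f i).
Proof. by elim/big_rec2: _ => // i y1 y2 _ <-; case: (f i); case: y2. Qed.

Lemma Im_sum (I : Type) (r : seq I) (P : pred I) (f : I -> C) :
  complex.Im (\sum_(i <- r | P i) f i) = \sum_(i <- r | P i) complex.Im (f i).
Proof. by elim/big_rec2: _ => // i y1 y2 _ <-; case: (f i); case: y2. Qed.

Definition ssumC u : C := (ssum (fun k => complex.Re (u k)) +i* ssum (fun k => complex.Im (u k)))%C.
Definition bsumC u := bsum (fun k => complex.Re (u k)) /\ bsum (fun k => complex.Im (u k)).

Lemma ssumC_lin (a : C) u v : bsumC u -> bsumC v ->
  ssumC (fun k => a * u k + v k) = a * ssumC u + ssumC v.
Proof.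
move=> [hu1 hu2] [hv1 hv2]; have cu1 := bsum_cvg hu1; have cu2 := bsum_cvg hu2.
have cv1 := bsum_cvg hv1; have cv2 := bsum_cvg hv2.
case: a => a1 a2; rewrite /ssumC /=.
have -> : (fun k => complex.Re ((a1 +i* a2)%C * u k + v k)) =
   (fun k => (a1 * complex.Re (u k) - a2 * complex.Im (u k)) + complex.Re (v k)).
  by apply/funext => k; case: (u k) => ? ?; case: (v k).
have -> : (fun k => complex.Im ((a1 +i* a2)%C * u k + v k)) =
   (fun k => (a1 * complex.Im (u k) + a2 * complex.Re (u k)) + complex.Im (v k)).
  by apply/funext => k; case: (u k) => ? ?; case: (v k).
rewrite ssumD; last 2 first.
- by apply: cvg_seriesB; apply: cvg_seriesZ.
- exact: cv1.
rewrite ssumB; try by apply: cvg_seriesZ.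
rewrite (@ssumD _ (fun k => a1 * complex.Im (u k) + a2 * complex.Re (u k))); last 2 first.
- by apply: cvg_seriesD; apply: cvg_seriesZ.
- exact: cv2.
rewrite ssumD; try by apply: cvg_seriesZ.
by rewrite !ssumZ //.
Qed.

Lemma ssumC_conj u : bsumC u -> ssumC (fun k => conjc (u k)) = conjc (ssumC u).
Proof.
move=> [_ hu2]; rewrite /ssumC /=.
have -> : (fun k => complex.Re (conjc (u k))) = (fun k => complex.Re (u k)).
  by apply/funext => k; case: (u k).
have -> : (fun k => complex.Im (conjc (u k))) = (fun k => -1 * complex.Im (u k)).
  by apply/funext => k; case: (u k) => ? ? /=; rewrite mulN1r.
by rewrite ssumZ ?mulN1r //; exact: bsum_cvg.
Qed.

Definition cps (x y : FF) (s : bool) (m : nat) : C :=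
  \sum_(i < N) x s m i * conjc (y s m i).

Lemma Re_cj_le (z w : C) : `|complex.Re (z * conjc w)| <= sqn z + sqn w.
Proof.
case: z => a b; case: w => c e; rewrite /sqn /= ler_norml; apply/andP; split.
  have := sqr_ge0 (a + c); have := sqr_ge0 (b - e); nra.
have := sqr_ge0 (a - c); have := sqr_ge0 (b + e); nra.
Qed.

Lemma Im_cj_le (z w : C) : `|complex.Im (z * conjc w)| <= sqn z + sqn w.
Proof.
case: z => a b; case: w => c e; rewrite /sqn /= ler_norml; apply/andP; split.
  have := sqr_ge0 (a + e); have := sqr_ge0 (b + c); nra.
have := sqr_ge0 (a - e); have := sqr_ge0 (b - c); nra.
Qed.

Lemma bsum_cps (x y : FF) s : x \in l2 -> y \in l2 -> bsumC (cps x y s).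
Proof.
rewrite !inE /= => hx hy; split.
  apply: (@bsum_le _ _ (fun m => sqs x s m + sqs y s m)); last exact: psbD.
  move=> m; rewrite /cps Re_sum /sqs -big_split /=.
  by apply: le_trans (ler_norm_sum _ _ _) _; apply: ler_sum => i _; exact: Re_cj_le.
apply: (@bsum_le _ _ (fun m => sqs x s m + sqs y s m)); last exact: psbD.
move=> m; rewrite /cps Im_sum /sqs -big_split /=.
by apply: le_trans (ler_norm_sum _ _ _) _; apply: ler_sum => i _; exact: Im_cj_le.
Qed.

Definition ip2 (x y : VV) : C :=
  ssumC (cps (vval x) (vval y) true) + ssumC (cps (vval x) (vval y) false).

Lemma cps_lin (a : C) (x y z : FF) s m :
  cps (a *: x + y) z s m = a * cps x z s m + cps y z s m.
Proof.
rewrite /cps mulr_sumr -big_split /=; apply: eq_bigr => i _.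
by rewrite mulrDl mulrA.
Qed.

Lemma cps_conj (x y : FF) s m : cps y x s m = conjc (cps x y s m).
Proof.
rewrite /cps rmorph_sum /=; apply: eq_bigr => i _.
by rewrite rmorphM /= conjcK mulrC.
Qed.

Lemma ip2_lin (a : C) (x y z : VV) : ip2 (a *: x + y) z = a * ip2 x z + ip2 y z.
Proof.
rewrite /ip2 valD valZ.
have e : forall s, cps (a *: vval x + vval y) (vval z) s =
   (fun m => a * cps (vval x) (vval z) s m + cps (vval y) (vval z) s m).
  by move=> s; apply/funext => m; exact: cps_lin.
rewrite !e !ssumC_lin; try apply: bsum_cps; try exact: vvalP.
rewrite mulrDr; ring.
Qed.

Lemma ip2_conj (x y : VV) : ip2 y x = conjc (ip2 x y).
Proof.
have cD : forall a b : C, conjc (a + b) = conjc a + conjc b.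
  by case=> ? ? [? ?] /=; rewrite opprD.
rewrite /ip2 cD -(ssumC_conj (bsum_cps true (vvalP x) (vvalP y))).
rewrite -(ssumC_conj (bsum_cps false (vvalP x) (vvalP y))).
by congr (ssumC _ + ssumC _); apply/funext => m; rewrite cps_conj.
Qed.

Definition nsq (x : FF) : R := ssum (sqs x true) + ssum (sqs x false).

Lemma cps_self (x : FF) s m : cps x x s m = (sqs x s m)%:C%C.
Proof.
rewrite /cps /sqs; apply/eqP; rewrite eq_complex Re_sum Im_sum /=; apply/andP; split.
  by apply/eqP; apply: eq_bigr => i _; case: (x s m i) => a b /=; rewrite /sqn /=; ring.
rewrite big1 // => i _; case: (x s m i) => a b /=; ring.
Qed.

Lemma ip2_self (x : VV) : ip2 x x = (nsq (vval x))%:C%C.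
Proof.
rewrite /ip2 /nsq /ssumC.
have e : forall s, (fun k => complex.Im (cps (vval x) (vval x) s k)) = (fun _ => 0).
  by move=> s; apply/funext => k; rewrite cps_self.
have e2 : forall s, (fun k => complex.Re (cps (vval x) (vval x) s k)) = sqs (vval x) s.
  by move=> s; apply/funext => k; rewrite cps_self.
rewrite !e !e2.
have -> : ssum (fun _ : nat => (0:R)) = 0 by rewrite ssum_single.
apply/eqP; rewrite eq_complex /=; rewrite addr0 !eqxx //.
Qed.

Lemma nsq_ge0 (x : FF) : x \in l2 -> 0 <= nsq x.
Proof.
rewrite inE /= => hx; rewrite /nsq addr_ge0 //; apply: ssum_ge0 => //; exact: sqs_ge0.
Qed.

End IP.
Section Complete.
Variable R : realType.

Lemma cauchy_real (w : nat -> R) :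
  (forall e : R, 0 < e -> exists N0, forall n, (N0 <= n)%N -> `|w N0 - w n| < e) ->
  cvgn w.
Proof.
move=> hw; apply: R_complete; apply: cauchy_exP => e e0.
have [N0 hN] := hw e e0; exists (w N0); exists N0 => // n /= hn.
Qed.

Lemma cvg_bigsum (I : Type) (r : seq I) (f : I -> nat -> R) (l : I -> R) :
  (forall i, f i @ \oo --> l i) ->
  (fun k => \sum_(i <- r) f i k) @ \oo --> \sum_(i <- r) l i.
Proof.
move=> h; elim: r => [|a r IH].
  rewrite big_nil; under eq_fun do rewrite big_nil; exact: cvg_cst.
rewrite big_cons; under eq_fun do rewrite big_cons.
exact: cvgD.
Qed.

Lemma sq_lt_norm (a e : R) : 0 < e -> a ^+ 2 < e ^+ 2 -> `|a| < e.
Proof. move=> e0 h; rewrite ltr_norml; apply/andP; split; nra. Qed.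

Lemma sqrt_lt_iff (a e : R) : 0 < e -> (Num.sqrt a < e) = (a < e ^+ 2).
Proof.
move=> e0; rewrite -[in LHS](@gtr0_norm _ e) // -sqrtr_sqr ltr_sqrt //.
by rewrite exprn_gt0.
Qed.

End Complete.
Section Hilb.
Variables (R : realType) (N : nat).
Local Notation C := R[i].
Local Notation FF := (FF R N).
Local Notation VV := (VV R N).
Local Notation l2 := (@l2 R N).
Local Notation ip2 := (@ip2 R N).

Lemma series_ge0 (u : nat -> R) M : (forall k, 0 <= u k) -> 0 <= series u M.
Proof. by move=> h; rewrite seriesE sumr_ge0. Qed.

Definition PP (x : FF) M := series (sqs x true) M + series (sqs x false) M.

Lemma PP_le (x : FF) M : x \in l2 -> PP x M <= nsq x.
Proof.
rewrite inE /= => hx; rewrite /PP /nsq.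
by apply: lerD; apply: ssum_ge => //; exact: sqs_ge0.
Qed.

Lemma series_le_PP (x : FF) s M : series (sqs x s) M <= PP x M.
Proof.
rewrite /PP; case: s.
  by rewrite lerDl series_ge0 // => k; exact: sqs_ge0.
by rewrite lerDr series_ge0 // => k; exact: sqs_ge0.
Qed.

Lemma coord_le (x : FF) s m i : x \in l2 -> sqn (x s m i) <= nsq x.
Proof.
move=> hx; apply: (le_trans _ (PP_le m.+1 hx)); apply: (le_trans _ (series_le_PP x s m.+1)).
have h1 : sqn (x s m i) <= sqs x s m.
  by rewrite /sqs (bigD1 i) //= lerDl sumr_ge0 // => j _; exact: sqn_ge0.
apply: le_trans h1 _; rewrite seriesSr lerDr series_ge0 // => k; exact: sqs_ge0.
Qed.


Lemma ipnormE (x : VV) : ipnorm ip2 x = Num.sqrt (nsq (vval x)).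
Proof. by rewrite /ipnorm ip2_self. Qed.

Lemma ip2_inner : is_inner_product ip2.
Proof.
split.
- exact: ip2_lin.
- exact: ip2_conj.
- move=> x; rewrite ip2_self lecE /= eqxx /=; exact: nsq_ge0 (vvalP x).
- move=> x; rewrite ip2_self => h.
  have h0 : nsq (vval x) = 0 by case: h.
  have hx := vvalP x; move: (hx); rewrite inE /= => hx'.
  have t0 : 0 <= ssum (sqs (vval x) true) by apply: ssum_ge0 => //; exact: sqs_ge0.
  have f0 : 0 <= ssum (sqs (vval x) false) by apply: ssum_ge0 => //; exact: sqs_ge0.
  have hs : forall s, ssum (sqs (vval x) s) = 0.
    by move: h0; rewrite /nsq => h0 [|]; lra.
  apply: val_inj; apply/funext => s; apply/funext => m; apply/funext => i.
  have e1 := ssum_eq0 (fun k => sqs_ge0 (vval x) s k) (hx' s) (hs s) m.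
  have e2 : sqn (vval x s m i) = 0.
    by apply: (psumr_eq0P (fun j _ => sqn_ge0 (vval x s m j)) e1).
  move: e2; rewrite /sqn /=; case: (vval x s m i) => a b /= e2.
  have a0 : a = 0 by have := sqr_ge0 a; have := sqr_ge0 b; nra.
  have b0 : b = 0 by have := sqr_ge0 a; have := sqr_ge0 b; nra.
  by rewrite a0 b0.
Qed.

End Hilb.
Section Compl.
Variables (R : realType) (N : nat).
Local Notation C := R[i].
Local Notation FF := (FF R N).
Local Notation VV := (VV R N).
Local Notation l2 := (@l2 R N).
Local Notation ip2 := (@ip2 R N).

Lemma sqnB (a b : C) : sqn (a - b) =
  (complex.Re a - complex.Re b) ^+ 2 + (complex.Im a - complex.Im b) ^+ 2.
Proof. by case: a => ? ?; case: b. Qed.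

Lemma ffB (f g : FF) s m i : (f - g) s m i = f s m i - g s m i.
Proof. by []. Qed.

Lemma valB (x y : VV) : vval (x - y) = vval x - vval y.
Proof. by []. Qed.

Lemma PPE (x : FF) M : PP x M =
  \sum_(s <- [:: true; false]) \sum_(m <- index_iota 0 M) \sum_(i < N) sqn (x s m i).
Proof. by rewrite /PP big_cons big_cons big_nil addr0. Qed.

Lemma ip2_complete : ip_complete ip2.
Proof.
move=> u hu.
pose d j := vval (u j).
have hc : forall e : R, 0 < e -> exists N0, forall m k, (N0 <= m)%N -> (N0 <= k)%N ->
    nsq (d m - d k) < e.
  move=> e e0; have se : 0 < Num.sqrt e by rewrite sqrtr_gt0.
  have [N0 h] := hu (Num.sqrt e) se; exists N0 => m k hm hk.
  have := h m k hm hk; rewrite ipnormE valB sqrt_lt_iff ?sqrtr_gt0 // sqr_sqrtr //.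
  exact: ltW.
have dl2 : forall m k, d m - d k \in l2.
  by move=> m k; rewrite -valB; exact: vvalP.
have cre : forall s m i, cvgn (fun j => complex.Re (d j s m i)).
  move=> s m i; apply: cauchy_real => e e0.
  have [N0 h] := hc (e ^+ 2) (exprn_gt0 2 e0); exists N0 => n hn.
  apply: sq_lt_norm => //; apply: le_lt_trans (h N0 n (leqnn _) hn).
  apply: le_trans (coord_le s m i (dl2 N0 n)).
  by rewrite sqnB /= lerDl sqr_ge0.
have cim : forall s m i, cvgn (fun j => complex.Im (d j s m i)).
  move=> s m i; apply: cauchy_real => e e0.
  have [N0 h] := hc (e ^+ 2) (exprn_gt0 2 e0); exists N0 => n hn.
  apply: sq_lt_norm => //; apply: le_lt_trans (h N0 n (leqnn _) hn).
  apply: le_trans (coord_le s m i (dl2 N0 n)).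
  by rewrite sqnB /= lerDr sqr_ge0.
pose vF : FF := fun s m i =>
  (limn (fun j => complex.Re (d j s m i)) +i* limn (fun j => complex.Im (d j s m i)))%C.
have cPP : forall j M, (fun k => PP (d j - d k) M) @ \oo --> PP (d j - vF) M.
  move=> j M; rewrite PPE; under eq_fun do rewrite PPE.
  apply: cvg_bigsum => s; apply: cvg_bigsum => m; apply: cvg_bigsum => i.
  rewrite ffB sqnB; under eq_fun do rewrite ffB sqnB.
  have hr := cre s m i; have hi := cim s m i.
  rewrite /vF /= !expr2.
  apply: cvgD; apply: cvgM; apply: cvgB; try exact: cvg_cst; assumption.
have bnd : forall e : R, 0 < e -> exists N0, forall j, (N0 <= j)%N ->
    forall M, PP (d j - vF) M <= e.
  move=> e e0; have [N0 h] := hc e e0; exists N0 => j hj M.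
  rewrite -(cvg_lim _ (cPP j M)) //; apply: limr_le.
    by apply/cvg_ex; eexists; exact: (cPP j M).
  exists N0 => // k /= hk; apply: le_trans (PP_le M (dl2 j k)) _.
  exact: ltW (h j k hj hk).
have inl2 : forall j e, 0 < e -> (forall M, PP (d j - vF) M <= e) -> d j - vF \in l2.
  move=> j e e0 h; rewrite inE /= => s; exists e => M.
  exact: le_trans (series_le_PP _ s M) (h M).
have hvF : vF \in l2.
  have [N0 h] := bnd 1 ltr01.
  have w2 := inl2 N0 1 ltr01 (h N0 (leqnn _)).
  have := rpredB (vvalP (u N0)) w2; rewrite -/(d N0).
  by rewrite opprB addrC subrK.
exists (MkVV hvF) => eps eps0.
have e2 : 0 < eps ^+ 2 / 2 by rewrite divr_gt0 // exprn_gt0.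
have [N0 h] := bnd _ e2; exists N0 => m hm.
rewrite ipnormE valB /= sqrt_lt_iff //.
have w2 := inl2 m _ e2 (h m hm); rewrite -/(d m).
apply: (@le_lt_trans _ _ (eps ^+ 2 / 2)); last first.
  by rewrite ltr_pdivrMr // ltr_pMr ?exprn_gt0 // ltr1n.
move: (w2); rewrite inE /= => w2'.
rewrite /nsq -ssumD; try by apply: nneg_cvg => // k; exact: sqs_ge0.
apply: ssum_le.
  by apply: cvg_seriesD; apply: nneg_cvg => // k; exact: sqs_ge0.
move=> M; rewrite seriesE big_split /=; exact: (h m hm M).
Qed.

Lemma ip2_hilbert : is_hilbert ip2.
Proof. by split; [exact: ip2_inner | exact: ip2_complete]. Qed.

End Compl.
Section Ops.
Variables (R : realType) (N : nat) (a : R).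
Local Notation C := R[i].
Local Notation FF := (FF R N).
Local Notation VV := (VV R N).
Local Notation l2 := (@l2 R N).
Local Notation ip2 := (@ip2 R N).

Definition TF (x : FF) : FF := fun s m i =>
  if s then (if m is m'.+1 then x true m' i else a%:C%C * x false 0%N i)
  else x false m.+1 i.
Definition TsF (y : FF) : FF := fun s m i =>
  if s then y true m.+1 i
  else (if m is m'.+1 then y false m' i else a%:C%C * y true 0%N i).

Lemma ffE (c : C) (f g : FF) s m i : (c *: f + g) s m i = c * f s m i + g s m i.
Proof. by []. Qed.

Lemma sqn_mul (z w : C) : sqn (z * w) = sqn z * sqn w.
Proof. by case: z => ? ?; case: w => ? ?; rewrite /sqn /=; ring. Qed.

Lemma sqn_real (r : R) : sqn r%:C%C = r ^+ 2.
Proof. by rewrite /sqn /= expr0n /= addr0. Qed.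

Lemma sqs_scale (r : C) (x : FF) s m :
  sqs (fun s m i => r * x s m i) s m = sqn r * sqs x s m.
Proof. by rewrite /sqs mulr_sumr; apply: eq_bigr => i _; rewrite sqn_mul. Qed.

Lemma psb_shift (u : nat -> R) : (forall k, 0 <= u k) -> psb u -> psb (fun k => u k.+1).
Proof.
move=> u0 [B hB]; exists B => n; apply: le_trans (hB n.+1).
by rewrite series_shift lerDr.
Qed.

Lemma psb_cons (u : nat -> R) : psb (fun k => u k.+1) -> psb u.
Proof.
move=> [B hB]; exists (`|u 0%N| + B) => -[|n].
  by rewrite seriesE big_geq // addr_ge0 // (le_trans _ (hB 0%N)) // seriesE big_geq.
by rewrite series_shift lerD // ler_norm.
Qed.

Lemma TF_l2 (x : FF) : x \in l2 -> TF x \in l2.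
Proof.
rewrite !inE /= => hx [|].
  apply: psb_cons; apply: (psb_le _ (hx true)) => k; by rewrite /sqs.
have -> : sqs (TF x) false = (fun k => sqs x false k.+1) by [].
exact: (psb_shift (fun k => sqs_ge0 x false k) (hx false)).
Qed.

Lemma TsF_l2 (x : FF) : x \in l2 -> TsF x \in l2.
Proof.
rewrite !inE /= => hx [|].
  have -> : sqs (TsF x) true = (fun k => sqs x true k.+1) by [].
  exact: (psb_shift (fun k => sqs_ge0 x true k) (hx true)).
apply: psb_cons; apply: (psb_le _ (hx false)) => k; by rewrite /sqs.
Qed.

Definition Top (v : VV) : VV := MkVV (TF_l2 (vvalP v)).
Definition Tsop (v : VV) : VV := MkVV (TsF_l2 (vvalP v)).

Lemma Top_lin : is_linear_op Top.
Proof.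
move=> c x y; apply: val_inj => /=.
apply/funext => s; apply/funext => m; apply/funext => i; case: s; case: m => [|m]; rewrite !ffE /= ?ffE; ring.
Qed.

Lemma Tsop_lin : is_linear_op Tsop.
Proof.
move=> c x y; apply: val_inj => /=.
apply/funext => s; apply/funext => m; apply/funext => i; case: s; case: m => [|m]; rewrite !ffE /= ?ffE; ring.
Qed.

End Ops.
Section Ops2.
Variables (R : realType) (N : nat) (a : R).
Local Notation C := R[i].
Local Notation FF := (FF R N).
Local Notation VV := (VV R N).
Local Notation l2 := (@l2 R N).
Local Notation ip2 := (@ip2 R N).
Local Notation TF := (TF a).
Local Notation TsF := (TsF a).
Local Notation Top := (Top a).
Local Notation Tsop := (Tsop a).

Lemma l2_cvg (x : FF) s : x \in l2 -> cvgn (series (sqs x s)).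
Proof. by rewrite inE /= => hx; apply: nneg_cvg (hx s) => k; exact: sqs_ge0. Qed.

Lemma sqs_a (x : FF) s m : sqs (fun s m i => a%:C%C * x s m i) s m = a ^+ 2 * sqs x s m.
Proof. by rewrite sqs_scale sqn_real. Qed.

Lemma nsq_T (x : FF) : x \in l2 -> nsq (TF x) = nsq x - (1 - a ^+ 2) * sqs x false 0%N.
Proof.
move=> hx; have hT := TF_l2 a hx.
have [_ e1] := ssum_shift (l2_cvg (s:=true) hT).
have [_ e2] := ssum_shift (l2_cvg (s:=false) hx).
rewrite /nsq e1 e2.
have -> : sqs (TF x) true 0%N = a ^+ 2 * sqs x false 0%N by rewrite -sqs_a.
have -> : (fun k => sqs (TF x) true k.+1) = sqs x true by [].
have -> : (fun k => sqs x false k.+1) = sqs (TF x) false by [].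
ring.
Qed.

Lemma nsq_Ts (x : FF) : x \in l2 -> nsq (TsF x) = nsq x - (1 - a ^+ 2) * sqs x true 0%N.
Proof.
move=> hx; have hT := TsF_l2 a hx.
have [_ e1] := ssum_shift (l2_cvg (s:=false) hT).
have [_ e2] := ssum_shift (l2_cvg (s:=true) hx).
rewrite /nsq e1 e2.
have -> : sqs (TsF x) false 0%N = a ^+ 2 * sqs x true 0%N by rewrite -sqs_a.
have -> : (fun k => sqs (TsF x) false k.+1) = sqs x false by [].
have -> : (fun k => sqs x true k.+1) = sqs (TsF x) true by [].
ring.
Qed.

Hypothesis ha : a ^+ 2 <= 1.

Lemma nsq_T_le (x : VV) : nsq (vval (Top x)) <= nsq (vval x).
Proof.
rewrite /= nsq_T ?vvalP // lerBlDr lerDl mulr_ge0 ?sqs_ge0 // subr_ge0; exact: ha.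
Qed.

Lemma nsq_Ts_le (x : VV) : nsq (vval (Tsop x)) <= nsq (vval x).
Proof.
rewrite /= nsq_Ts ?vvalP // lerBlDr lerDl mulr_ge0 ?sqs_ge0 // subr_ge0; exact: ha.
Qed.

Lemma Top_contr : is_contraction_op ip2 Top.
Proof.
split; first exact: Top_lin.
move=> x; rewrite !ipnormE ler_sqrt ?nsq_T_le //; exact: nsq_ge0 (vvalP x).
Qed.


Lemma ssumC_shift (u : nat -> C) : bsumC u -> ssumC u = u 0%N + ssumC (fun k => u k.+1).
Proof.
move=> [h1 h2]; rewrite /ssumC.
have [_ e1] := ssum_shift (bsum_cvg h1); have [_ e2] := ssum_shift (bsum_cvg h2).
by rewrite e1 e2; case: (u 0%N).
Qed.

Lemma Top_adj : is_adjoint ip2 Top Tsop.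
Proof.
move=> x y; rewrite /ip2 /=.
have hx := vvalP x; have hy := vvalP y.
rewrite (ssumC_shift (bsum_cps true (TF_l2 a hx) hy)).
rewrite [X in _ = _ + X](ssumC_shift (bsum_cps false hx (TsF_l2 a hy))).
have -> : (fun k => cps (TF (vval x)) (vval y) true k.+1) = cps (vval x) (TsF (vval y)) true by [].
have -> : (fun k => cps (vval x) (TsF (vval y)) false k.+1) = cps (TF (vval x)) (vval y) false by [].
have -> : cps (TF (vval x)) (vval y) true 0%N = cps (vval x) (TsF (vval y)) false 0%N.
  rewrite /cps; apply: eq_bigr => i _ /=.
  by case: (vval x false 0%N i) => ? ?; case: (vval y true 0%N i) => ? ? /=; congr (Complex _ _); ring.
ring.
Qed.

End Ops2.
Section Dop.
Variables (R : realType) (N : nat) (a : R).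
Local Notation C := R[i].
Local Notation FF := (FF R N).
Local Notation VV := (VV R N).
Local Notation l2 := (@l2 R N).
Local Notation ip2 := (@ip2 R N).
Local Notation TF := (TF a).
Local Notation TsF := (TsF a).
Local Notation Top := (Top a).
Local Notation Tsop := (Tsop a).

Lemma conj_realM (r : R) (w : C) : conjc (r%:C%C * w) = r%:C%C * conjc w.
Proof. by rewrite rmorphM /= oppr0. Qed.

Lemma Re_rzz (r : R) (z : C) : complex.Re (r%:C%C * z * conjc z) = r * sqn z.
Proof. by case: z => p q; rewrite /sqn /=; ring. Qed.

Lemma ssumC_single (u : nat -> C) : (forall k, u k.+1 = 0) -> ssumC u = u 0%N.
Proof.
move=> h; rewrite /ssumC !ssum_single; first by case: (u 0%N).
  by move=> k; rewrite h.
by move=> k; rewrite h.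
Qed.

Definition sup0 (x : FF) := (forall m i, x true m.+1 i = 0) /\ (forall m i, x false m i = 0).

Lemma ip2_sup0l (x y : VV) : sup0 (vval x) -> ip2 x y = cps (vval x) (vval y) true 0%N.
Proof.
move=> [h1 h2]; rewrite /ip2 (ssumC_single (u := cps _ _ true)); last first.
  by move=> k; rewrite /cps big1 // => i _; rewrite h1 mul0r.
rewrite (ssumC_single (u := cps _ _ false)); last first.
  by move=> k; rewrite /cps big1 // => i _; rewrite h2 mul0r.
by rewrite [cps _ _ false 0%N]/cps big1 ?addr0 // => i _; rewrite h2 mul0r.
Qed.

Lemma ip2_sup0r (x y : VV) : sup0 (vval y) -> ip2 x y = cps (vval x) (vval y) true 0%N.
Proof.
move=> hy; rewrite -[LHS]conjcK -ip2_conj ip2_sup0l //.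
by rewrite [RHS](cps_conj (vval y) (vval x)).
Qed.

Lemma sup0_l2 (x : FF) : sup0 x -> x \in l2.
Proof.
move=> [h1 h2]; rewrite inE /= => -[|].
  apply: psb_cons; exists 0 => n; rewrite seriesE big1 // => m _.
  by rewrite /sqs big1 // => i _; rewrite h1 /sqn /= expr0n /= addr0.
exists 0 => n; rewrite seriesE big1 // => m _.
by rewrite /sqs big1 // => i _; rewrite h2 /sqn /= expr0n /= addr0.
Qed.

Variable d : R.
Definition DF (x : FF) : FF := fun s m i =>
  if s then (if m is 0%N then d%:C%C * x true 0%N i else 0) else 0.

Lemma DF_sup0 x : sup0 (DF x). Proof. by split. Qed.

Definition Dop (v : VV) : VV := MkVV (sup0_l2 (DF_sup0 (vval v))).

Lemma Dop_lin : is_linear_op Dop.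
Proof.
move=> c x y; apply: val_inj => /=.
apply/funext => s; apply/funext => m; apply/funext => i; case: s; case: m => [|m];
  rewrite !ffE /= ?ffE; ring.
Qed.

Lemma Dop_sadj : is_adjoint ip2 Dop Dop.
Proof.
move=> x y; rewrite ip2_sup0l ?DF_sup0 // ip2_sup0r ?DF_sup0 //.
rewrite /cps; apply: eq_bigr => i _ /=.
by rewrite conj_realM; ring.
Qed.

Hypothesis d0 : 0 <= d.


Lemma Dop_pos x : 0 <= ip2 (Dop x) x.
Proof.
rewrite ip2_sup0l ?DF_sup0 // lecE /cps Re_sum Im_sum /=; apply/andP; split.
  by rewrite big1 // => i _; case: (vval x true 0%N i) => p q /=; ring.
apply: sumr_ge0 => i _; rewrite Re_rzz.
by rewrite mulr_ge0 // sqn_ge0.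
Qed.

Lemma sqs00_le (x : FF) : x \in l2 -> sqs x true 0%N <= nsq x.
Proof.
move=> hx; apply: le_trans (PP_le 1 hx); apply: le_trans (series_le_PP x true 1).
by rewrite seriesE big_nat1.
Qed.

Lemma nsq_D (x : FF) : nsq (DF x) = d ^+ 2 * sqs x true 0%N.
Proof.
rewrite /nsq (ssum_single (u := sqs _ true)); last first.
  by move=> k; rewrite /sqs big1 // => i _; rewrite /sqn /= expr0n /= addr0.
rewrite (ssum_single (u := sqs _ false)); last first.
  by move=> k; rewrite /sqs big1 // => i _; rewrite /sqn /= expr0n /= addr0.
rewrite [sqs _ false _]/sqs big1 ?addr0; last first.
  by move=> i _; rewrite /sqn /= expr0n /= addr0.
rewrite -sqn_real -sqs_scale //.
Qed.

Hypothesis d1 : d ^+ 2 <= 1.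

Lemma Dop_bnd : is_bounded_op ip2 Dop.
Proof.
split; first exact: Dop_lin.
exists 1 => x; rewrite mul1r !ipnormE ler_sqrt ?nsq_ge0 ?vvalP //= nsq_D.
apply: le_trans (sqs00_le (vvalP x)).
by rewrite ler_piMl // sqs_ge0.
Qed.

Hypothesis hd : d ^+ 2 = 1 - a ^+ 2.

Lemma Dop_sq x : Dop (Dop x) = x - Top (Tsop x).
Proof.
have e : forall t, d * (d * t) = t - a * (a * t).
  by move=> t; rewrite mulrA -expr2 hd; ring.
apply: val_inj => /=; apply/funext => s; apply/funext => m; apply/funext => i.
rewrite ffB; case: s; case: m => [|m] /=; try by rewrite subrr.
case: (vval x true 0%N i) => p q /=; congr (Complex _ _).
  by transitivity (d * (d * p)); [ring | rewrite e; ring].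
by transitivity (d * (d * q)); [ring | rewrite e; ring].
Qed.

End Dop.
Section Evec.
Variables (R : realType) (N : nat) (a d : R).
Local Notation C := R[i].
Local Notation FF := (FF R N).
Local Notation VV := (VV R N).
Local Notation l2 := (@l2 R N).
Local Notation ip2 := (@ip2 R N).
Local Notation Dop := (@Dop R N d).

Definition EF (i : 'I_N) : FF := fun s m j =>
  if s then (if m is 0%N then (if j == i then 1 else 0) else 0) else 0.
Lemma EF_sup0 i : sup0 (EF i). Proof. by split. Qed.
Definition Eop (i : 'I_N) : VV := MkVV (sup0_l2 (EF_sup0 i)).

Lemma Eop_orth i j : ip2 (Eop i) (Eop j) = (i == j)%:R.
Proof.
rewrite ip2_sup0l ?EF_sup0 // /cps /= (bigD1 i) //= eqxx mul1r big1 ?addr0.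
  by case: (i == j) => /=; rewrite oppr0.
by move=> k /negbTE ->; rewrite mul0r.
Qed.

Lemma ffZ (c : C) (f : FF) s m i : (c *: f) s m i = c * f s m i.
Proof. by []. Qed.

Lemma vval_sum n (F : 'I_n -> VV) : val (\sum_(i < n) F i) = \sum_(i < n) val (F i).
Proof. by elim/big_rec2: _ => // i y1 y2 _ <-. Qed.

Lemma ff_sum n (F : 'I_n -> FF) s m j : (\sum_(i < n) F i) s m j = \sum_(i < n) F i s m j.
Proof. by elim/big_rec2: _ => // i y1 y2 _ <-. Qed.

Lemma Dop_span (x : VV) : Dop x = \sum_(i < N) (d%:C%C * vval x true 0%N i) *: Eop i.
Proof.
apply: val_inj; rewrite vval_sum; apply/funext => s; apply/funext => m; apply/funext => j.
rewrite ff_sum /=.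
under eq_bigr do rewrite ffZ /=.
case: s; last by rewrite big1 // => i _; rewrite mulr0.
case: m => [|m]; last by rewrite big1 // => i _; rewrite mulr0.
rewrite (bigD1 j) //= eqxx mulr1 big1 ?addr0 // => i /negbTE.
by rewrite eq_sym => ->; rewrite mulr0.
Qed.

Lemma Dop_frank : finite_rank Dop.
Proof. exists N; exists Eop; move=> x; exists (fun i => d%:C%C * vval x true 0%N i); exact: Dop_span. Qed.

Hypothesis dn0 : d != 0.

Lemma Dop_onb : is_onb_range ip2 Dop Eop.
Proof.
split.
- exact: Eop_orth.
- move=> i; exists ((d^-1)%:C%C *: Eop i); apply: val_inj => /=.
  apply/funext => s; apply/funext => m; apply/funext => j.
  case: s => //; case: m => // /=; rewrite ffZ /= mulrA -rmorphM /= mulfV //.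
  by rewrite mul1r.
- by move=> x; exists (fun i => d%:C%C * vval x true 0%N i); exact: Dop_span.
Qed.

End Evec.
Section Resolv.
Variables (R : realType) (N : nat) (a d : R).
Local Notation C := R[i].
Local Notation FF := (FF R N).
Local Notation VV := (VV R N).
Local Notation l2 := (@l2 R N).
Local Notation ip2 := (@ip2 R N).
Local Notation Dop := (@Dop R N d).
Local Notation Top := (Top a).
Local Notation Tsop := (Tsop a).
Local Notation Eop := (@Eop R N).

Lemma sqn_exp (z : C) m : sqn (z ^+ m) = sqn z ^+ m.
Proof.
elim: m => [|m IH]; first by rewrite !expr0 /sqn /= expr0n /= addr0 expr1n.
by rewrite !exprS sqn_mul IH.
Qed.

Lemma sqn_conj (z : C) : sqn (conjc z) = sqn z.
Proof. by case: z => p q; rewrite /sqn /= sqrrN. Qed.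

Lemma sqn0 : sqn (0 : C) = 0.
Proof. by rewrite /sqn /= expr0n /= addr0. Qed.

Lemma psb_geo (q : R) : 0 <= q -> q < 1 -> psb (fun k => q ^+ k).
Proof.
move=> q0 q1; exists (1 - q)^-1 => n.
have -> : (fun k => q ^+ k) = geometric 1 q by apply/funext => k; rewrite /geometric /= mul1r.
rewrite geometric_seriesE ?lt_eqF //= mul1r -[X in _ <= X]mul1r ler_pM2r ?invr_gt0 ?subr_gt0 //.
by rewrite lerBlDr lerDl exprn_ge0.
Qed.

Variable c : C.
Let q := sqn c.
Hypothesis hq : q < 1.
Let k := (1 - q)^-1.

Lemma q_ge0 : 0 <= q. Proof. exact: sqn_ge0. Qed.

Definition YF (i : 'I_N) : FF := fun s m j =>
  if s then (if j == i then (conjc c) ^+ m else 0) else 0.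
Definition XF (i : 'I_N) : FF := fun s m j =>
  if j == i then (if s then (conjc c) ^+ m * k%:C%C else c ^+ m.+1 * (a * k)%:C%C) else 0.

Lemma sqs_single (f : 'I_N -> C) i : (forall j, j != i -> f j = 0) ->
  \sum_(j < N) sqn (f j) = sqn (f i).
Proof.
move=> h; rewrite (bigD1 i) //= big1 ?addr0 // => j /h ->; exact: sqn0.
Qed.

Lemma YF_l2 i : YF i \in l2.
Proof.
rewrite inE /= => -[|]; last first.
  by exists 0 => n; rewrite seriesE big1 // => m _; rewrite /sqs big1 // => j _; exact: sqn0.
apply: (psb_le _ (psb_geo q_ge0 hq)) => m.
rewrite /sqs (@sqs_single (fun j => YF i true m j) i) /YF ?eqxx.
  by rewrite sqn_exp sqn_conj.
by move=> j /negbTE ->.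
Qed.

Lemma XF_l2 i : XF i \in l2.
Proof.
rewrite inE /= => -[|].
  apply: (psb_le _ (psbZ (sqr_ge0 k) (psb_geo q_ge0 hq))) => m.
  rewrite /sqs (@sqs_single (fun j => XF i true m j) i) /XF ?eqxx.
    by rewrite sqn_mul sqn_exp sqn_conj sqn_real mulrC.
  by move=> j /negbTE ->.
apply: (psb_le _ (psbZ (mulr_ge0 q_ge0 (sqr_ge0 (a * k))) (psb_geo q_ge0 hq))) => m.
rewrite /sqs (@sqs_single (fun j => XF i false m j) i) /XF ?eqxx.
  by rewrite sqn_mul sqn_exp sqn_real exprS -/q mulrAC.
by move=> j /negbTE ->.
Qed.


Definition Yop i : VV := MkVV (YF_l2 i).
Definition Xop i : VV := MkVV (XF_l2 i).

Lemma ffB' (f g : FF) s m i : (f - g) s m i = f s m i - g s m i.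
Proof. by []. Qed.

Lemma eqY i : (d%:C%C *: Yop i) - conjc c *: Top (d%:C%C *: Yop i) = Dop (Eop i).
Proof.
apply: val_inj => /=; apply/funext => s; apply/funext => m; apply/funext => j.
rewrite ffB' !ffZ /=.
case: s; case: m => [|m] /=; rewrite ?ffZ /=; case: (j == i); rewrite ?exprS; ring.
Qed.

Lemma mulcJ (z : C) : z * conjc z = (sqn z)%:C%C.
Proof. by case: z => p r; rewrite /sqn /=; congr (Complex _ _); ring. Qed.

Lemma one_k : (1 - q%:C%C) * k%:C%C = 1.
Proof.
have q1 : 1 - q != 0 by rewrite subr_eq0 eq_sym lt_eqF.
apply/eqP; rewrite eq_complex /=; apply/andP; split; apply/eqP.
  by rewrite subrr !mulr0 subr0 mulfV.
by rewrite subrr !mulr0 mul0r addr0.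
Qed.

Lemma eqX i : (d%:C%C *: Xop i) - c *: Tsop (d%:C%C *: Xop i) = d%:C%C *: Yop i.
Proof.
apply: val_inj => /=; apply/funext => s; apply/funext => m; apply/funext => j.
rewrite ffB' !ffZ /=.
case: s; case: m => [|m] /=; rewrite ?ffZ /XF /YF /=; case: (j == i); try ring.
- rewrite expr0 expr1.
  transitivity (d%:C%C * ((1 - c * conjc c) * k%:C%C)); first ring.
  by rewrite mulcJ one_k mulr1.
- rewrite (exprS _ m.+1).
  transitivity (d%:C%C * (conjc c ^+ m.+1 * ((1 - c * conjc c) * k%:C%C))); first ring.
  by rewrite mulcJ one_k mulr1.
- rewrite (exprS _ m.+1); ring.
Qed.
End Resolv.
Section Uniq.
Variables (R : realType) (N : nat).
Local Notation C := R[i].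
Local Notation FF := (FF R N).
Local Notation VV := (VV R N).
Local Notation l2 := (@l2 R N).
Local Notation ip2 := (@ip2 R N).

Lemma nsq_scale (k : C) (w : VV) : nsq (val (k *: w)) = sqn k * nsq (val w).
Proof.
have e : forall s, sqs (val (k *: w)) s = (fun m => sqn k * sqs (val w) s m).
  by move=> s; apply/funext => m; rewrite -sqs_scale.
rewrite /nsq !e !ssumZ ?mulrDr //; exact: l2_cvg (vvalP w).
Qed.

Lemma nsq0_eq0 (w : VV) : nsq (val w) = 0 -> w = 0.
Proof. by move=> h; have [_ _ _ h4] := ip2_inner R N; apply: h4; rewrite ip2_self h. Qed.

Lemma lin_sub (O : VV -> VV) : is_linear_op O -> forall x y, O (x - y) = O x - O y.
Proof.
move=> hO x y; have := hO (-1) y x; rewrite !scaleN1r => e.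
by rewrite [x - y]addrC e addrC.
Qed.

Lemma sol_uniq (O : VV -> VV) (k : C) : is_linear_op O ->
  (forall w, nsq (val (O w)) <= nsq (val w)) -> sqn k < 1 ->
  forall w1 w2, w1 - k *: O w1 = w2 - k *: O w2 -> w1 = w2.
Proof.
move=> hO hc hk w1 w2 e.
have ew : w1 - w2 = k *: O (w1 - w2).
  rewrite lin_sub // scalerBr -{1}[w1](subrK (k *: O w1)) e.
  by rewrite addrAC [w2 - _ - w2]addrAC subrr sub0r addrC.
have h1 : nsq (val (w1 - w2)) <= sqn k * nsq (val (w1 - w2)).
  rewrite {1}ew nsq_scale ler_wpM2l ?sqn_ge0 //.
have h0 := nsq_ge0 (vvalP (w1 - w2)).
have : nsq (val (w1 - w2)) = 0.
  apply/eqP; rewrite eq_le h0 andbT.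
  have : (1 - sqn k) * nsq (val (w1 - w2)) <= 0 by rewrite mulrBl mul1r subr_le0.
  by rewrite pmulr_rle0 // subr_gt0.
by move/nsq0_eq0/eqP; rewrite subr_eq0 => /eqP.
Qed.

Lemma inv_opE (A : VV -> VV) v w0 : A w0 = v -> (forall y, A y = v -> y = w0) ->
  inv_op A v = w0.
Proof. by move=> h1 h2; apply: xget_unique. Qed.

End Uniq.
Section Curv.
Variables (R : realType) (N : nat) (a d : R).
Local Notation C := R[i].
Local Notation VV := (VV R N).
Local Notation ip2 := (@ip2 R N).
Hypothesis ha : a ^+ 2 <= 1.
Hypothesis hd : d ^+ 2 = 1 - a ^+ 2.

Lemma sqn_circ (t : R) : sqn (circ t) = 1.
Proof. by rewrite /sqn /circ /= cos2Dsin2. Qed.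

Lemma inner_sol (c : C) (hq : sqn c < 1) (i : 'I_N) :
  inv_op (fun w => w - conjc c *: Top a w) (Dop d (Eop R i)) = d%:C%C *: Yop hq i.
Proof.
apply: inv_opE; first exact: eqY.
move=> y hy; have hk : sqn (conjc c) < 1 by rewrite sqn_conj.
apply: (@sol_uniq _ _ _ (conjc c) (Top_lin a) (nsq_T_le ha) hk).
by rewrite hy eqY.
Qed.

Lemma outer_sol (c : C) (hq : sqn c < 1) (i : 'I_N) :
  inv_op (fun w => w - c *: Tsop a w) (d%:C%C *: Yop hq i) = d%:C%C *: Xop a hq i.
Proof.
apply: inv_opE; first exact: eqX.
move=> y hy; apply: (@sol_uniq _ _ _ c (Tsop_lin a) (nsq_Ts_le ha) hq).
by rewrite hy eqX.
Qed.

Lemma trace_term (c : C) (hq : sqn c < 1) (i : 'I_N) :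
  complex.Re (ip2 (Dop d (d%:C%C *: Xop a hq i)) (Eop R i)) = d ^+ 2 * (1 - sqn c)^-1.
Proof.
rewrite ip2_sup0r ?EF_sup0 // /cps Re_sum (bigD1 i) //= big1 ?addr0.
  by rewrite eqxx ffZ /XF eqxx /=; ring.
by move=> j /negbTE hj; rewrite hj ffZ /XF hj /=; ring.
Qed.


Lemma integrand_val (t r : R) : 0 < r -> r < 1 ->
  curv_integrand ip2 (Top a) (Tsop a) (Dop d) (@Eop R N) t r = N%:R * d ^+ 2.
Proof.
move=> r0 r1; rewrite /curv_integrand /trace_on.
have sc : sqn (r%:C%C * circ t) = r ^+ 2 by rewrite sqn_mul sqn_real sqn_circ mulr1.
have hq : sqn (r%:C%C * circ t) < 1.
  by rewrite sc expr_lt1 // ?ltW // gtr0_norm.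
rewrite Re_sum.
under eq_bigr do rewrite (inner_sol hq) (outer_sol hq) (trace_term hq).
rewrite sumr_const card_ord sc -mulr_natl.
have h : 1 - r ^+ 2 != 0.
  by rewrite subr_eq0 eq_sym lt_eqF // expr_lt1 // ?ltW // gtr0_norm.
by field.
Qed.

End Curv.
Section CurvGen.
Variables (R : realType) (V : lmodType R[i]) (ip : V -> V -> R[i]) (T Ts D : V -> V)
  (n : nat) (e : 'I_n -> V) (kappa : R).

Hypothesis hI : forall t r : R, 0 < r -> r < 1 -> curv_integrand ip T Ts D e t r = kappa.

Lemma boundary_val t : curv_boundary ip T Ts D e t = kappa.
Proof.
rewrite /curv_boundary; apply: lim_near_cst => //.
near=> r; apply: hI; [near: r; exact: nbhs_left_gt | near: r; exact: nbhs_left_lt].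
Unshelve. all: by end_near.
Qed.

Lemma curvature_val : curvature ip T Ts D e = kappa%:E.
Proof.
rewrite /curvature.
under eq_integral do rewrite boundary_val.
rewrite integral_cst //= lebesgue_measure_itv /= lte_fin.
have p0 : 0 < 2 * pi :> R by rewrite mulr_gt0 // pi_gt0.
rewrite p0 oppr0 addr0 -!EFinM; congr (_%:E).
by rewrite mulrCA mulVf ?mulr1 // gt_eqF.
Qed.

End CurvGen.
Section Final.
Variable R : realType.

Lemma package (N : nat) (a : R) : 0 <= a -> a < 1 ->
  let d := Num.sqrt (1 - a ^+ 2) in
  [/\ is_hilbert (@ip2 R N), is_contraction_op (@ip2 R N) (Top a),
      is_adjoint (@ip2 R N) (Top a) (Tsop a),
      is_defect_op (@ip2 R N) (Top a) (Tsop a) (Dop d) &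
      [/\ finite_rank (@Dop R N d), is_onb_range (@ip2 R N) (Dop d) (@Eop R N) &
      curvature (@ip2 R N) (Top a) (Tsop a) (Dop d) (@Eop R N) = (N%:R * (1 - a ^+ 2))%:E]].
Proof.
move=> a0 a1 d.
have ha : a ^+ 2 <= 1 by rewrite expr2; nra.
have h1 : 0 <= 1 - a ^+ 2 by rewrite subr_ge0.
have hd : d ^+ 2 = 1 - a ^+ 2 by rewrite /d sqr_sqrtr.
have d0 : 0 <= d by rewrite /d sqrtr_ge0.
have d1 : d ^+ 2 <= 1 by rewrite hd lerBlDr lerDl sqr_ge0.
have dn0 : d != 0.
  have a2 : a * a < 1 by nra.
  rewrite /d; apply/eqP => /eqP; rewrite sqrtr_eq0 subr_le0 expr2 => h.
  by have := lt_le_trans a2 h; rewrite ltxx.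
split.
- exact: ip2_hilbert.
- exact: Top_contr.
- exact: Top_adj.
- split; [exact: Dop_bnd | exact: Dop_sadj | exact: Dop_pos | exact: Dop_sq].
split.
- exact: Dop_frank.
- exact: Dop_onb.
- apply: curvature_val => t r r0 r1; rewrite (integrand_val N d ha t r0 r1) hd //.
Qed.


Lemma Dop0 (N : nat) (x : VV R N) : Dop 0 x = 0.
Proof.
apply: val_inj => /=; apply/funext => s; apply/funext => m; apply/funext => j.
by case: s; case: m => //=; rewrite mul0r.
Qed.

Lemma package0 :
  [/\ is_hilbert (@ip2 R 1), is_contraction_op (@ip2 R 1) (Top 1),
      is_adjoint (@ip2 R 1) (Top 1) (Tsop 1),
      is_defect_op (@ip2 R 1) (Top (1 : R)) (Tsop 1) (Dop 0) &
      [/\ finite_rank (@Dop R 1 0), is_onb_range (@ip2 R 1) (Dop 0) (fun i : 'I_0 => 0) &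
      curvature (@ip2 R 1) (Top 1) (Tsop 1) (Dop 0) (fun i : 'I_0 => 0) = 0%:E]].
Proof.
have ha : (1 : R) ^+ 2 <= 1 by rewrite expr1n.
split.
- exact: ip2_hilbert.
- exact: Top_contr.
- exact: Top_adj.
- split; [apply: Dop_bnd; by rewrite expr0n | exact: Dop_sadj | exact: Dop_pos | ].
  by apply: Dop_sq; rewrite expr0n expr1n subrr.
split.
- exact: Dop_frank.
- split; [by case | by case | ].
  by move=> x; exists (fun _ => 0); rewrite big_ord0 Dop0.
- apply: curvature_val => t r r0 r1.
  by rewrite /curv_integrand /trace_on big_ord0 /= mulr0.
Qed.

Definition HF (k : nat) : FF R 1 := fun s m j => if s then 0 else (if m == k then 1 else 0).

Lemma HF0_l2 : HF 0 \in @l2 R 1.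
Proof.
rewrite inE /= => -[|].
  by exists 0 => n; rewrite seriesE big1 // => m _; rewrite /sqs big1 // => j _; exact: sqn0.
apply: psb_cons; exists 0 => n; rewrite seriesE big1 // => m _.
by rewrite /sqs big1 // => j _; exact: sqn0.
Qed.

Lemma not_pure (a : R) : ~ is_pure (@ip2 R 1) (Tsop a).
Proof.
move=> hp; have := hp (MkVV HF0_l2).
have hv : forall k, vval (iter k (Tsop a) (MkVV HF0_l2)) = HF k.
  elim=> [//|k IH]; rewrite iterS /= IH.
  apply/funext => s; apply/funext => m; apply/funext => j.
  by case: s; case: m => [|m] //=; rewrite /HF /= mulr0.
have ge1 : forall k, 1 <= ipnorm (@ip2 R 1) (iter k (Tsop a) (MkVV HF0_l2)).
  move=> k; rewrite ipnormE -sqrtr1 ler_sqrt; last by apply: nsq_ge0; exact: vvalP.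
  have := coord_le false k ord0 (vvalP (iter k (Tsop a) (MkVV HF0_l2))).
  by rewrite hv /HF /= eqxx /sqn /= expr1n expr0n /= addr0.
move=> hc; have l0 := cvg_lim _ hc.
have : 1 <= lim ((fun k => ipnorm (@ip2 R 1) (iter k (Tsop a) (MkVV HF0_l2))) @ \oo).
  apply: limr_ge; first by apply/cvg_ex; eexists; exact: hc.
  exact: nearW.
by rewrite l0 // ler10.
Qed.

End Final.
Local Close Scope classical_set_scope.

Lemma half_not_int (R : realType) : ~ (exists k : int, (1 / 2 : R) = k%:~R).
Proof.
move=> [k hk].
have h0 : (0 : R) < k%:~R by rewrite -hk divr_gt0.
have h1 : (k%:~R : R) < 1.
  by rewrite -hk ltr_pdivrMr // mul1r; lra.
rewrite -[0]/((0 : int)%:~R) ltr_int in h0.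
rewrite -[1]/((1 : int)%:~R) ltr_int in h1.
by case: k h0 h1 {hk} => [[|n]|n].
Qed.

Unset Implicit Arguments.
Theorem mainTheorem10 (R : realType) :
  (forall kappa : R, 0 <= kappa ->
    exists (V : lmodType R[i]) (ip : V -> V -> R[i]) (T Ts D : V -> V)
           (n : nat) (e : 'I_n -> V),
      is_hilbert ip /\ is_contraction_op ip T /\ is_adjoint ip T Ts /\
      is_defect_op ip T Ts D /\ finite_rank D /\ is_onb_range ip D e /\
      curvature ip T Ts D e = kappa%:E)
  /\
  (exists (V : lmodType R[i]) (ip : V -> V -> R[i]) (T Ts D : V -> V)
          (n : nat) (e : 'I_n -> V) (kappa : R),
      is_hilbert ip /\ is_contraction_op ip T /\ is_adjoint ip T Ts /\
      is_defect_op ip T Ts D /\ finite_rank D /\ is_onb_range ip D e /\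
      ~ is_pure ip Ts /\
      curvature ip T Ts D e = kappa%:E /\
      ~ (exists k : int, kappa = k%:~R)).
Proof.
split.
  move=> kappa k0; have [->|kn0] := eqVneq kappa 0.
    have [h1 h2 h3 h4 [h5 h6 h7]] := package0 R.
    by exists (VV R 1), (@ip2 R 1), (Top 1), (Tsop 1), (Dop 0), 0%N, (fun _ => 0).
  have kp : 0 < kappa by rewrite lt_neqAle eq_sym kn0.
  pose N := (Num.trunc kappa).+1.
  have hN : kappa < N%:R by exact: truncnS_gt.
  have N0 : (0 : R) < N%:R by rewrite ltr0n.
  pose b := 1 - kappa / N%:R.
  have b0 : 0 <= b by rewrite subr_ge0 ler_pdivrMr // mul1r ltW.
  have b1 : b < 1 by rewrite ltrBlDr ltrDl divr_gt0.
  pose a := Num.sqrt b.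
  have a0 : 0 <= a by rewrite sqrtr_ge0.
  have a1 : a < 1 by rewrite /a -sqrtr1 ltr_sqrt.
  have [h1 h2 h3 h4 [h5 h6 h7]] := package N a0 a1.
  exists (VV R N), (@ip2 R N), (Top a), (Tsop a), (Dop (Num.sqrt (1 - a ^+ 2))), N, (@Eop R N).
  do 6!split => //.
  rewrite h7 /a sqr_sqrtr // /b; congr (_%:E); field.
  by rewrite gt_eqF.
pose a : R := Num.sqrt (1 / 2).
have a0 : 0 <= a by rewrite sqrtr_ge0.
have a1 : a < 1.
  by rewrite /a -[X in _ < X]sqrtr1 ltr_sqrt // ltr_pdivrMr // mul1r; lra.
have [h1 h2 h3 h4 [h5 h6 h7]] := package 1 a0 a1.
exists (VV R 1), (@ip2 R 1), (Top a), (Tsop a), (Dop (Num.sqrt (1 - a ^+ 2))), 1%N, (@Eop R 1), (1 / 2).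
do 6!split => //; split; first exact: not_pure.
split; last exact: half_not_int.
rewrite h7 /a sqr_sqrtr ?divr_ge0 //; congr (_%:E); field.
by [].
Qed.
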